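(* Let $L>0$, $\mathbb{T}=\mathbb{R}/L\mathbb{Z}$, let $\gamma_k\in(0,1]$ for all $k\in\mathbb{Z}$, let $s>0$, and set $\delta^{(s)}_k=\frac{(1+k^2)^{s+1}}{\gamma_k^s}$. Let $u_0\in H_{\delta^{(s)}}(\mathbb{T})$ and let $u$ be the solution of the linear equation \[ u_t-u_{txx}+u_x+\mathscr{L}_\gamma(u)=0,\quad x\in\mathbb{T},\qquad u(0)=u_0. \] Then for all $t>0$, \[ |u(t)|_{H^1}^2\le\min\Big(e^{-s}\Big(\frac{s}{2t}\Big)^s|u_0|_{\delta^{(s)}}^2,\ |u_0|_{H^1}^2\Big). \]
   Context: For $u\in L^2(\mathbb{T})$, $\hat u_k$ is its $k$-th Fourier coefficient; in symbols $k$ stands for the frequency $2\pi k/L$. $\mathscr{L}_\gamma$ is the Fourier multiplier $\widehat{\mathscr{L}_\gamma(u)}_k=\gamma_k\hat u_k$. For a positive sequence $(\alpha_k)$, $H_\alpha(\mathbb{T})=\{u : \sum_k\alpha_k|\hat u_k|^2<\infty\}$ with $|u|_\alpha^2=\sum_k\alpha_k|\hat u_k|^2$. The $H^1$ norm is $|u|_{H^1}^2=\sum_k(1+k^2)|\hat u_k|^2$. The solution is given by $\hat u_k(t)=e^{-\frac{\gamma_k+ik}{1+k^2}t}\hat u_k(0)$. *)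

(* Defs.v *)
From Stdlib Require Import Reals ZArith.
From Coquelicot Require Import Coquelicot.
Open Scope R_scope.

Definition freq (L : R) (k : Z) : R := 2 * PI * IZR k / L.

(* Sum over Z of a real family, through symmetric partial sums:
   term 0 is f 0, term n>0 is f n + f (-n). For nonnegative families this is
   the usual (unordered) sum over Z. *)
Definition zterm (f : Z -> R) (n : nat) : R :=
  match n with
  | O => f 0%Z
  | S _ => f (Z.of_nat n) + f (- Z.of_nat n)%Z
  end.
Definition summableZ (f : Z -> R) : Prop := ex_series (zterm f).
Definition sumZ (f : Z -> R) : R := Series (zterm f).

(* A function on T is represented by its Fourier coefficients uhat : Z -> C. *)
Definition wnorm2 (alpha : Z -> R) (u : Z -> C) : R :=
  sumZ (fun k => alpha k * (Cmod (u k)) ^ 2).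
Definition inH (alpha : Z -> R) (u : Z -> C) : Prop :=
  summableZ (fun k => alpha k * (Cmod (u k)) ^ 2).

(* H^1 weight 1 + k^2 (k the frequency 2 pi k / L) *)
Definition h1w (L : R) (k : Z) : R := 1 + (freq L k) ^ 2.
Definition H1norm2 (L : R) (u : Z -> C) : R := wnorm2 (h1w L) u.

Definition delta_s (L s : R) (gamma : Z -> R) (k : Z) : R :=
  Rpower (h1w L k) (s + 1) / Rpower (gamma k) s.

Definition cexp (a b : R) : C := (exp a * cos b, exp a * sin b).

(* Solution of u_t - u_txx + u_x + L_gamma u = 0, u(0) = u0, on Fourier side:
   uhat_k(t) = exp(-(gamma_k + i k)/(1+k^2) t) uhat_k(0). *)
Definition sol (L : R) (gamma : Z -> R) (u0 : Z -> C) (t : R) (k : Z) : C :=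
  Cmult (cexp (- gamma k * t / h1w L k) (- freq L k * t / h1w L k)) (u0 k).

(* Main.v *)
Require Import Defs.
From Stdlib Require Import Reals ZArith Lra Psatz.
From Coquelicot Require Import Coquelicot.
Open Scope R_scope.

Lemma exp_le' x y : x <= y -> exp x <= exp y.
Proof. intros [H|H]; [left; apply exp_increasing; auto | subst; lra]. Qed.

Lemma ln_le_sub1 y : 0 < y -> ln y <= y - 1.
Proof. intros Hy. pose proof (exp_ineq1_le (ln y)). rewrite exp_ln in H; lra. Qed.

Lemma Cmod_cexp a b : Cmod (cexp a b) = exp a.
Proof.
  unfold Cmod, cexp; simpl.
  pose proof (sin2_cos2 b) as H. unfold Rsqr in H.
  match goal with |- sqrt ?e = _ => replace e with (exp a ^ 2) by nra end.
  apply sqrt_pow2. left; apply exp_pos.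
Qed.

Lemma term_bound h g t s c : 1 <= h -> 0 < g <= 1 -> 0 < t -> 0 < s ->
  h * (exp (- g * t / h) * c) ^ 2 <=
  exp (- s) * Rpower (s / (2 * t)) s * (Rpower h (s + 1) / Rpower g s * c ^ 2).
Proof.
  intros Hh Hg Ht Hs.
  assert (Hh0 : 0 < h) by lra.
  replace (h * (exp (- g * t / h) * c) ^ 2) with ((h * exp (- g * t / h) ^ 2) * c ^ 2) by ring.
  replace (exp (- s) * Rpower (s / (2 * t)) s * (Rpower h (s + 1) / Rpower g s * c ^ 2))
    with ((exp (- s) * Rpower (s / (2 * t)) s * (Rpower h (s + 1) / Rpower g s)) * c ^ 2) by ring.
  apply Rmult_le_compat_r; [nra|].
  unfold Rpower.
  replace (h * exp (- g * t / h) ^ 2) with (exp (ln h + 2 * (- g * t / h))).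
  2:{ rewrite exp_plus, exp_ln by lra. replace (2 * (- g * t / h)) with (- g * t / h + - g * t / h) by ring.
      rewrite exp_plus; ring. }
  replace (exp (- s) * exp (s * ln (s / (2 * t))) * (exp ((s + 1) * ln h) / exp (s * ln g)))
    with (exp (- s + s * ln (s / (2 * t)) + (s + 1) * ln h - s * ln g)).
  2:{ unfold Rminus. rewrite !exp_plus, !exp_Ropp. field. split; apply Rgt_not_eq, exp_pos. }
  apply exp_le'.
  set (X := g * t / h).
  assert (HX : 0 < X) by (unfold X; apply Rdiv_lt_0_compat; nra).
  pose proof (ln_le_sub1 (2 * X / s)) as Hl.
  assert (Hy : 0 < 2 * X / s) by (apply Rdiv_lt_0_compat; lra).
  specialize (Hl Hy).
  assert (E : ln (2 * X / s) = ln (2 * t) + ln g - ln h - ln s).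
  { unfold X. replace (2 * (g * t / h) / s) with ((2 * t) * g / (h * s)) by (field; lra).
    rewrite ln_div, !ln_mult; try nra. }
  rewrite E in Hl.
  rewrite ln_div by lra.
  assert (H2 : s * (ln (2 * t) + ln g - ln h - ln s) <= s * (2 * X / s - 1))
    by (apply Rmult_le_compat_l; lra).
  replace (s * (2 * X / s - 1)) with (2 * X - s) in H2 by (field; lra).
  replace (- g * t / h) with (- X) by (unfold X; field; lra).
  nra.
Qed.

Lemma zterm_le f g : (forall k, 0 <= f k <= g k) -> forall n, 0 <= zterm f n <= zterm g n.
Proof.
  intros H n. destruct n; simpl; [apply H|].
  destruct (H (Z.pos (Pos.of_succ_nat n))), (H (Z.neg (Pos.of_succ_nat n))). lra.
Qed.

Lemma sumZ_le f g : (forall k, 0 <= f k <= g k) -> summableZ g -> sumZ f <= sumZ g.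
Proof. intros H Hg. apply Series_le; auto. apply zterm_le; auto. Qed.

Lemma sumZ_scal c f : sumZ (fun k => c * f k) = c * sumZ f.
Proof.
  unfold sumZ. rewrite <- Series_scal_l. apply Series_ext. intros [|n]; simpl; ring.
Qed.

Lemma summableZ_scal c f : summableZ f -> summableZ (fun k => c * f k).
Proof.
  unfold summableZ. intros H.
  apply ex_series_ext with (fun n => c * zterm f n).
  - intros [|n]; simpl; ring.
  - exact (@ex_series_scal_l R_AbsRing R_NormedModule c _ H).
Qed.

Theorem mainTheorem5 (L : R) (gamma : Z -> R) (s : R) (u0 : Z -> C)
  (HL : 0 < L)
  (Hgamma : forall k : Z, 0 < gamma k <= 1)
  (Hs : 0 < s)
  (Hu0 : inH (delta_s L s gamma) u0) :
  forall t : R, 0 < t ->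
    H1norm2 L (sol L gamma u0 t)
    <= Rmin (exp (- s) * Rpower (s / (2 * t)) s * wnorm2 (delta_s L s gamma) u0)
            (H1norm2 L u0).
Proof.
  intros t Ht.
  assert (Hh : forall k, 1 <= h1w L k).
  { intros k. unfold h1w. pose proof (pow2_ge_0 (freq L k)). lra. }
  assert (Hsol : forall k, Cmod (sol L gamma u0 t k) = exp (- gamma k * t / h1w L k) * Cmod (u0 k)).
  { intros k. unfold sol. rewrite Cmod_mult, Cmod_cexp. reflexivity. }
  assert (Hdel : forall k, h1w L k * Cmod (u0 k) ^ 2 <= delta_s L s gamma k * Cmod (u0 k) ^ 2).
  { intros k. apply Rmult_le_compat_r; [apply pow2_ge_0|].
    unfold delta_s, Rpower. specialize (Hh k). destruct (Hgamma k) as [g0 g1].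
    rewrite <- (exp_ln (h1w L k)) at 1 by lra.
    unfold Rdiv. rewrite <- exp_Ropp, <- exp_plus. apply exp_le'.
    assert (0 <= ln (h1w L k)) by (rewrite <- ln_1; apply ln_le; lra).
    assert (ln (gamma k) <= 0) by (rewrite <- ln_1; apply ln_le; lra).
    nra. }
  assert (HH1 : summableZ (fun k => h1w L k * Cmod (u0 k) ^ 2)).
  { unfold summableZ. apply (@ex_series_le R_AbsRing R_CompleteNormedModule _ (zterm (fun k => delta_s L s gamma k * Cmod (u0 k) ^ 2))); [|exact Hu0].
    intros n. rewrite Rabs_pos_eq. 2:{ apply zterm_le with (g := fun k => h1w L k * Cmod (u0 k) ^ 2).
      intros k. split; [|lra]. specialize (Hh k). pose proof (pow2_ge_0 (Cmod (u0 k))). nra. }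
    apply zterm_le. intros k. split; [|apply Hdel]. specialize (Hh k). pose proof (pow2_ge_0 (Cmod (u0 k))). nra. }
  apply Rmin_glb.
  - unfold wnorm2, H1norm2. rewrite <- sumZ_scal. apply sumZ_le.
    2:{ apply summableZ_scal. exact Hu0. }
    intros k. rewrite Hsol. split.
    + specialize (Hh k). apply Rmult_le_pos; [lra|apply pow2_ge_0].
    + apply term_bound; auto.
  - unfold wnorm2, H1norm2. apply sumZ_le; auto.
    intros k. rewrite Hsol. specialize (Hh k). destruct (Hgamma k).
    assert (Ee : exp (- gamma k * t / h1w L k) <= 1).
    { rewrite <- exp_0. apply exp_le'.
      assert (0 < gamma k * t / h1w L k) by (apply Rdiv_lt_0_compat; nra).
      replace (- gamma k * t / h1w L k) with (- (gamma k * t / h1w L k)) by (field; lra). lra. }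
    pose proof (exp_pos (- gamma k * t / h1w L k)).
    pose proof (Cmod_ge_0 (u0 k)).
    split.
    + apply Rmult_le_pos; [lra|apply pow2_ge_0].
    + apply Rmult_le_compat_l; [lra|]. rewrite Rpow_mult_distr.
      pose proof (pow2_ge_0 (Cmod (u0 k))).
      assert (exp (- gamma k * t / h1w L k) ^ 2 <= 1) by nra. nra.
Qed.
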